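(* In base $B=3$, for every integer $\eta>2$, $$\gamma_3(\eta)=4\left(\frac{3^{-1/2}}{2}\,3\uparrow\uparrow(\eta-2)\right)^{7/2}-1,$$ i.e. with $E_1=\frac{3^{-1/2}}{2}\,3^{7/2}$ and $E_{m+1}=\frac{3^{-1/2}}{2}\,3^{E_m}$ for $m\ge1$, one has $\gamma_3(\eta)=4E_{\eta-2}-1$.
   Context: Every integer $x>0$ is written uniquely in base $3$ as $x=\sum_{i} x_i 3^i$ with digits $x_i\in\{0,1,2\}$. Define $\mathcal{H}_3(x)=\sum_{i} x_i^2$, $\mathcal{H}_3^0(x)=x$, $\mathcal{H}_3^n=\mathcal{H}_3\circ\mathcal{H}_3^{n-1}$. A positive integer $x$ is happy if $\mathcal{H}_3^n(x)=1$ for some $n\in\mathbb{N}$; its height is $\eta_3(x)=\min\{\alpha\in\mathbb{N}:\mathcal{H}_3^\alpha(x)=1\}$. For $n\in\mathbb{N}$, $\gamma_3(n)$ denotes the smallest happy number $x\ge1$ with $\eta_3(x)=n$. Adapted up-arrow notation: for reals $k,x,y,z$ and integer $n\ge1$, $k(xy\uparrow\uparrow n)^z=k\,E_n$ where $E_1=x\,y^{z}$ and $E_{m+1}=x\,y^{E_m}$ (the factor ''$xy$'' is repeated $n$ times in the tower $k\,x y^{x y^{\cdot^{\cdot^{x y^{z}}}}}$); here $k=4$, $x=\frac{3^{-1/2}}{2}$, $y=3$, $z=\frac72$. *)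

(* Defs.v *)
From Stdlib Require Import Reals Arith.
Open Scope R_scope.

(* Sum of squares of base-3 digits, computed with fuel x (enough since each
   step divides by 3; the digit 0 of the exhausted part contributes 0). *)
Fixpoint H3_fuel (fuel x : nat) : nat :=
  match fuel with
  | O => O
  | S f => ((x mod 3) * (x mod 3) + H3_fuel f (x / 3))%nat
  end.

Definition H3 (x : nat) : nat := H3_fuel x x.

Definition H3iter (n x : nat) : nat := Nat.iter n H3 x.

Definition happy3 (x : nat) : Prop := (0 < x)%nat /\ exists n : nat, H3iter n x = 1%nat.

Definition height3 (x a : nat) : Prop :=
  H3iter a x = 1%nat /\ forall b : nat, (b < a)%nat -> H3iter b x <> 1%nat.

Definition is_gamma3 (n x : nat) : Prop :=
  (1 <= x)%nat /\ happy3 x /\ height3 x n /\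
  forall y : nat, (1 <= y)%nat -> happy3 y -> height3 y n -> (x <= y)%nat.

(* Adapted up-arrow tower: E_0 = z, E_{m+1} = x * y^(E_m); so E_1 = x y^z,
   and k (x y ^^ n)^z = k * uptower x y z n for n >= 1. *)
Fixpoint uptower (x y z : R) (n : nat) : R :=
  match n with
  | O => z
  | S m => x * Rpower y (uptower x y z m)
  end.

(* Main.v *)
Require Import Defs.
From Stdlib Require Import Reals Arith Lia Lra.
Open Scope R_scope.

Lemma H3_fuel_0 : forall f, H3_fuel f 0%nat = 0%nat.
Proof. induction f; simpl; auto. Qed.

Lemma H3_fuel_stable : forall f g x, (x <= f)%nat -> (x <= g)%nat -> H3_fuel f x = H3_fuel g x.
Proof.
  induction f as [|f IH]; intros g x Hf Hg.
  - assert (x = 0%nat) by lia; subst. rewrite !H3_fuel_0; reflexivity.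
  - destruct g as [|g].
    + assert (x = 0%nat) by lia; subst. simpl. rewrite !H3_fuel_0; reflexivity.
    + cbn [H3_fuel]. f_equal. apply IH.
      * pose proof (Nat.div_mod x 3 ltac:(lia)). lia.
      * pose proof (Nat.div_mod x 3 ltac:(lia)). lia.
Qed.

Lemma H3_rec : forall x, H3 x = ((x mod 3) * (x mod 3) + H3 (x / 3))%nat.
Proof.
  intros [|x].
  - reflexivity.
  - unfold H3 at 1. simpl H3_fuel. f_equal. unfold H3.
    apply H3_fuel_stable; [|lia].
    pose proof (Nat.div_lt (S x) 3). lia.
Qed.

Lemma H3_0 : H3 0%nat = 0%nat.
Proof. reflexivity. Qed.

Lemma H3_top : forall k, H3 (2 * 3 ^ k - 1) = (4 * k + 1)%nat.
Proof.
  induction k.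
  - reflexivity.
  - rewrite H3_rec.
    assert (E : (2 * 3 ^ S k - 1 = 2 + (2 * 3 ^ k - 1) * 3)%nat).
    { rewrite Nat.pow_succ_r'. pose proof (Nat.pow_nonzero 3 k). lia. }
    rewrite E, Nat.Div0.mod_add by lia.
    rewrite Nat.div_add by lia. change (2 mod 3)%nat with 2%nat. change (2/3)%nat with 0%nat.
    rewrite Nat.add_0_l, IHk. lia.
Qed.

Lemma H3_bound : forall k x, (x + 1 < 2 * 3 ^ k)%nat -> (H3 x <= 4 * k)%nat.
Proof.
  induction k as [|k IH]; intros x Hx.
  - simpl in Hx. assert (x = 0%nat) by lia. subst. reflexivity.
  - rewrite H3_rec. rewrite Nat.pow_succ_r' in Hx.
    set (P := (3 ^ k)%nat) in *.
    pose proof (Nat.div_mod x 3 ltac:(lia)) as Hd.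
    pose proof (Nat.mod_upper_bound x 3 ltac:(lia)) as Hm.
    set (q := (x / 3)%nat) in *. set (r := (x mod 3)%nat) in *.
    destruct (Nat.lt_ge_cases (q + 1) (2 * P)) as [Hq|Hq].
    + pose proof (IH q Hq). assert (r * r <= 4)%nat by nia. lia.
    + assert (q = 2 * P - 1)%nat by lia.
      assert (r <= 1)%nat by lia.
      assert (H3 q = 4 * k + 1)%nat by (subst q; rewrite H; apply H3_top).
      assert (r * r <= 1)%nat by nia. lia.
Qed.

Lemma iter_succ_r : forall n x, H3iter (S n) x = H3iter n (H3 x).
Proof.
  unfold H3iter. induction n; intros x; simpl; auto.
  f_equal. apply IHn.
Qed.

Lemma H3iter_0 : forall n, H3iter n 0%nat = 0%nat.
Proof. unfold H3iter; induction n; simpl; auto. rewrite IHn. reflexivity. Qed.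

Lemma step : forall n k, is_gamma3 n (4 * k + 1) -> (1 <= n)%nat ->
  is_gamma3 (S n) (2 * 3 ^ k - 1).
Proof.
  intros n k [_ [_ [[Hh Hb] Hmin]]] Hn.
  assert (Hk : (1 <= k)%nat).
  { destruct k; [|lia]. exfalso. apply (Hb 0%nat); [lia|reflexivity]. }
  assert (HP : (3 <= 3 ^ k)%nat).
  { replace 3%nat with (3^1)%nat at 1 by reflexivity. apply Nat.pow_le_mono_r; lia. }
  assert (Hht : height3 (2 * 3 ^ k - 1) (S n)).
  { split.
    - rewrite iter_succ_r, H3_top. exact Hh.
    - intros [|b] Hb'.
      + simpl. lia.
      + rewrite iter_succ_r, H3_top. apply Hb. lia. }
  split; [lia|]. split; [split; [lia| exists (S n); apply Hht]|]. split; [exact Hht|].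
  intros y Hy _ [Hyh Hyb].
  assert (HH : height3 (H3 y) n).
  { split.
    - rewrite <- iter_succ_r. exact Hyh.
    - intros b Hb'. rewrite <- iter_succ_r. apply Hyb. lia. }
  assert (Hpos : (1 <= H3 y)%nat).
  { destruct (H3 y) eqn:E; [|lia]. exfalso. destruct HH as [HH _].
    rewrite H3iter_0 in HH. discriminate. }
  assert (Hle : (4 * k + 1 <= H3 y)%nat).
  { apply Hmin; auto. split; [lia|]. exists n. apply HH. }
  destruct (Nat.lt_ge_cases (y + 1) (2 * 3 ^ k)) as [Hc|Hc]; [|lia].
  pose proof (H3_bound k y Hc). lia.
Qed.

Definition chk (y : nat) : bool :=
  negb ((H3iter 2 y =? 1)%nat && negb (H3iter 1 y =? 1)%nat && negb (H3iter 0 y =? 1)%nat).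

Lemma chk_ok : forall y, (y < 13)%nat -> chk y = true.
Proof.
  intros y Hy. do 13 (destruct y as [|y]; [reflexivity|]). lia.
Qed.

Lemma gamma2 : is_gamma3 2 13.
Proof.
  assert (Hht : height3 13 2).
  { split; [reflexivity|]. intros [|[|b]] Hb; [cbv; lia|cbv; lia|lia]. }
  split; [lia|]. split; [split; [lia|exists 2%nat; apply Hht]|]. split; [exact Hht|].
  intros y _ _ [H1 H2].
  destruct (Nat.lt_ge_cases y 13) as [Hc|Hc]; [|exact Hc].
  exfalso. pose proof (chk_ok y Hc) as C. unfold chk in C.
  destruct (Nat.eqb_spec (H3iter 1 y) 1) as [e|e]; [apply (H2 1%nat); auto|].
  destruct (Nat.eqb_spec (H3iter 0 y) 1) as [e'|e']; [apply (H2 0%nat); auto|].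
  rewrite H1 in C.
  discriminate.
Qed.

Lemma pow3_odd : forall K, exists k, (3 ^ K = 2 * k + 1)%nat.
Proof.
  induction K as [|K [k Hk]].
  - exists 0%nat. reflexivity.
  - exists (3 * k + 1)%nat. rewrite Nat.pow_succ_r', Hk. lia.
Qed.

Lemma main : forall m, exists K, is_gamma3 (m + 3) (2 * 3 ^ K - 1) /\
  uptower (Rpower 3 (-1/2) / 2) 3 (7/2) (m + 1) = 3 ^ K / 2.
Proof.
  induction m as [|m [K [HG HU]]].
  - exists 3%nat. split.
    + apply (step 2 3 gamma2). lia.
    + simpl uptower. unfold Rdiv at 1.
      rewrite (Rmult_comm (Rpower 3 (-1/2))), Rmult_assoc, <- Rpower_plus.
      replace (-1/2 + 7/2) with (INR 3) by (simpl; lra).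
      rewrite Rpower_pow by lra. lra.
  - destruct (pow3_odd K) as [k Hk]. exists k. split.
    + replace (S m + 3)%nat with (S (m + 3)) by lia. apply step; [|lia].
      replace (4 * k + 1)%nat with (2 * 3 ^ K - 1)%nat by lia. exact HG.
    + replace (S m + 1)%nat with (S (m + 1)) by lia. simpl uptower. rewrite HU.
      assert (E : 3 ^ K = 2 * INR k + 1).
      { assert (E0 : INR (3 ^ K)%nat = 3 ^ K).
        { rewrite pow_INR. replace (INR 3) with 3 by (simpl; lra). reflexivity. }
        rewrite <- E0, Hk, plus_INR, mult_INR. simpl. lra. }
      unfold Rdiv at 1. rewrite E.
      rewrite (Rmult_comm (Rpower 3 (-1/2))), Rmult_assoc, <- Rpower_plus.
      replace (-1/2 + (2 * INR k + 1) / 2) with (INR k) by lra.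
      rewrite Rpower_pow by lra. lra.
Qed.

Theorem theorem5p2 :
  forall eta : nat, (2 < eta)%nat ->
    exists g : nat, is_gamma3 eta g /\
      INR g = 4 * uptower (Rpower 3 (-1/2) / 2) 3 (7/2) (eta - 2) - 1.
Proof.
  intros eta Heta.
  destruct (main (eta - 3)) as [K [HG HU]].
  replace (eta - 3 + 3)%nat with eta in HG by lia.
  replace (eta - 3 + 1)%nat with (eta - 2)%nat in HU by lia.
  exists (2 * 3 ^ K - 1)%nat. split; [exact HG|].
  rewrite HU. pose proof (Nat.pow_nonzero 3 K ltac:(lia)).
  rewrite minus_INR by lia. rewrite mult_INR, pow_INR.
  replace (INR 3) with 3 by (simpl; lra). simpl. lra.
Qed.
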